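(* Let $(\mathcal{C},\mathbb{E},\mathfrak{s})$ be an extriangulated category and $\mathcal{I}$ an ideal of $\mathcal{C}$. Consider: (a) there is an additive subfunctor $\mathbb{F}\subseteq\mathbb{E}$ having enough injective objects with $\mathcal{I}=\mathrm{Ph}(\mathbb{F})$; (a') there is an additive subfunctor $\mathbb{F}\subseteq\mathbb{E}$ having enough special injective objects with $\mathcal{I}=\mathrm{Ph}(\mathbb{F})$; (b) $\mathcal{I}$ is an object-special precovering ideal; (c) $\mathcal{I}^\star$ has enough special injective objects and $\mathcal{I}=\mathrm{Ph}(\mathcal{I}^\star)$; (d) $\mathcal{I}$ is a special precovering ideal and $\mathcal{I}^{\perp_{\mathbb{E}}}$ is an object ideal. Then: (I) if $\mathcal{C}$ has enough projective morphisms, (a) (and hence (a')) implies (b); (II) if $\mathcal{C}$ has enough injective objects, (b) implies (c); (III) if $\mathcal{C}$ has enough projective morphisms, (c) implies (d); (IV) (d) implies (b); (V) (c) implies (a').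
   Context: An extriangulated category $(\mathcal{C},\mathbb{E},\mathfrak{s})$ (Nakaoka–Palu): additive $\mathcal{C}$, biadditive $\mathbb{E}:\mathcal{C}^{\mathrm{op}}\times\mathcal{C}\to\mathrm{Ab}$, additive realization $\mathfrak{s}$ assigning to each $\delta\in\mathbb{E}(C,A)$ an equivalence class of sequences $A\to B\to C$, forming $\mathbb{E}$-triangles $A\to B\to C\overset{\delta}{\dashrightarrow}$, satisfying (ET1)–(ET4), (ET3)$^{\mathrm{op}}$, (ET4)$^{\mathrm{op}}$. Notation $a_\star\delta=\mathbb{E}(C,a)(\delta)$, $c^\star\delta=\mathbb{E}(c,A)(\delta)$; a morphism of $\mathbb{E}$-triangles is a commuting triple $(a,b,c)$ with $a_\star\delta=c^\star\delta'$. Enough injective objects: every $A$ admits an $\mathbb{E}$-triangle $A\to E\to C\overset{\delta}{\dashrightarrow}$ with $\mathbb{E}(-,E)=0$. Enough projective morphisms: every $C$ admits an $\mathbb{E}$-triangle $K\to P\xrightarrow{p}C\overset{\gamma}{\dashrightarrow}$ with $p^\star\delta=0$ for all $\delta\in\mathbb{E}(C,A)$. Ideal: class of morphisms with zeros, closed under sums and two-sided composition. Additive subfunctor $\mathbb{F}$: subgroups $\mathbb{F}(C,A)\subseteq\mathbb{E}(C,A)$ stable under $a_\star,c^\star$; $\mathbb{F}$-triangles have extension in $\mathbb{F}$, $\mathbb{F}$-inflations are their first morphisms. $\mathrm{Ph}(\mathbb{F})$: $\varphi:X\to C$ with $\varphi^\star\delta\in\mathbb{F}(X,A)$ for all $\delta\in\mathbb{E}(C,A)$.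 $\mathbb{F}\text{-}\mathrm{inj}$: $i:A\to Y$ with $i_\star\delta=0$ for all $\delta\in\mathbb{F}(C,A)$; an object $B$ is $\mathbb{F}$-injective if $\mathrm{id}_B\in\mathbb{F}\text{-}\mathrm{inj}$. $\mathbb{F}$ has enough injective objects: every $A$ admits an $\mathbb{F}$-triangle $A\xrightarrow{e}B\to C\overset{\delta}{\dashrightarrow}$ with $B$ $\mathbb{F}$-injective; enough special injective objects: moreover there is an $\mathbb{E}$-triangle $A\to B'\to C'\overset{\delta'}{\dashrightarrow}$ and a morphism $(\mathrm{id}_A,b,\varphi)$ from the former to it with $\varphi\in\mathrm{Ph}(\mathbb{F})$. $\mathcal{I}^\star(X,A)=\{i^\star\delta\mid i\in\mathcal{I}(X,C),\delta\in\mathbb{E}(C,A)\}$. $\mathcal{I}^{\perp_{\mathbb{E}}}=\{g:A\to Y\mid m^\star g_\star\delta=0\ \forall m\in\mathcal{I},\,m:X\to C,\ \forall\delta\in\mathbb{E}(C,A)\}$. For a class $\mathcal{K}$ of morphisms, $\mathrm{Ob}(\mathcal{K})=\{A\mid\mathrm{id}_A\in\mathcal{K}\}$, $\langle\mathcal{K}\rangle$ the smallest ideal containing $\mathcal{K}$; $\mathcal{K}$ is an object ideal if $\mathcal{K}=\langle\mathrm{Ob}(\mathcal{K})\rangle$; $A\in\mathcal{K}$ means $A\in\mathrm{Ob}(\mathcal{K})$. Special $\mathcal{I}$-precover of $C$: $i:X\to C$ in $\mathcal{I}$ with $\mathbb{E}$-triangles $A\to B\to C\overset{\delta}{\dashrightarrow}$,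 $A'\to X\xrightarrow{i}C\overset{\delta'}{\dashrightarrow}$ and a morphism $(j,b,\mathrm{id}_C)$ between them, $j\in\mathcal{I}^{\perp_{\mathbb{E}}}$. Object-special $\mathcal{I}$-precover of $C$: $i:X\to C$ in $\mathcal{I}$ with an $\mathbb{E}$-triangle $A\to X\xrightarrow{i}C\overset{\delta}{\dashrightarrow}$, $A\in\mathcal{I}^{\perp_{\mathbb{E}}}$. (Object-)special precovering ideal: every object has such a precover. *)

(* Defs.v *)
From HB Require Import structures.
From mathcomp Require Import all_boot all_algebra.
Set Implicit Arguments. Unset Strict Implicit. Unset Printing Implicit Defensive.
Import GRing.Theory.
Local Open Scope ring_scope.

(* Ext C A stands for E(C,A); pf a = a_star = E(C,a), pb c = c^star = E(c,A).
   realizes x y d  means  "A -x-> B -y-> C -d->" is an E-triangle,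
   i.e. the sequence (x,y) belongs to the class s(d). *)
Record PreExtri := {
  Obj : Type;
  Hom : Obj -> Obj -> zmodType;
  idm : forall A, Hom A A;
  comp : forall A B C, Hom B C -> Hom A B -> Hom A C;
  Ext : Obj -> Obj -> zmodType;
  pf : forall C A A', Hom A A' -> Ext C A -> Ext C A';
  pb : forall C' C A, Hom C' C -> Ext C A -> Ext C' A;
  realizes : forall A B C, Hom A B -> Hom B C -> Ext C A -> Prop
}.

Arguments idm {p} A.
Arguments comp {p A B C}.
Arguments pf {p C A A'}.
Arguments pb {p C' C A}.
Arguments realizes {p A B C}.

Section Extri.
Variable C : PreExtri.
Local Notation Ob := (Obj C).
Local Notation Hom := (@Hom C).
Local Notation Ext := (@Ext C).

Definition is_iso (A B : Ob) (f : Hom A B) :=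
  exists g : Hom B A, comp g f = idm A /\ comp f g = idm B.

Definition equiv_seq (A B B' Cc : Ob) (x : Hom A B) (y : Hom B Cc)
  (x' : Hom A B') (y' : Hom B' Cc) :=
  exists b : Hom B B', is_iso b /\ comp b x = x' /\ comp y' b = y.

Definition is_biprod (A1 A2 S : Ob) (i1 : Hom A1 S) (i2 : Hom A2 S)
  (p1 : Hom S A1) (p2 : Hom S A2) :=
  [/\ comp p1 i1 = idm A1, comp p2 i2 = idm A2, comp p1 i2 = 0,
      comp p2 i1 = 0 & comp i1 p1 + comp i2 p2 = idm S].

Definition tri_morph (A B Cc A' B' C' : Ob)
  (x : Hom A B) (y : Hom B Cc) (d : Ext Cc A)
  (x' : Hom A' B') (y' : Hom B' C') (d' : Ext C' A')
  (a : Hom A A') (b : Hom B B') (c : Hom Cc C') :=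
  [/\ comp b x = comp x' a, comp c y = comp y' b & pf a d = pb c d'].

Definition is_additive_cat :=
  [/\ (forall A B Cc D (h : Hom Cc D) (g : Hom B Cc) (f : Hom A B),
         comp h (comp g f) = comp (comp h g) f),
      (forall A B (f : Hom A B), comp (idm B) f = f),
      (forall A B (f : Hom A B), comp f (idm A) = f),
      (forall A B Cc (g g' : Hom B Cc) (f : Hom A B),
         comp (g + g') f = comp g f + comp g' f) &
      [/\ (forall A B Cc (g : Hom B Cc) (f f' : Hom A B),
         comp g (f + f') = comp g f + comp g f'),
      (exists Z : Ob, idm Z = 0) &
      (forall A1 A2 : Ob, exists S (i1 : Hom A1 S) (i2 : Hom A2 S)
         (p1 : Hom S A1) (p2 : Hom S A2), is_biprod i1 i2 p1 p2)]].

Definition ET1 :=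
  [/\ (forall Cc A A' (a a' : Hom A A') (d : Ext Cc A), pf (a + a') d = pf a d + pf a' d),
      (forall Cc A A' (a : Hom A A') (d d' : Ext Cc A), pf a (d + d') = pf a d + pf a d'),
      (forall C' Cc A (c c' : Hom C' Cc) (d : Ext Cc A), pb (c + c') d = pb c d + pb c' d),
      (forall C' Cc A (c : Hom C' Cc) (d d' : Ext Cc A), pb c (d + d') = pb c d + pb c d') &
      [/\ (forall Cc A (d : Ext Cc A), pf (idm A) d = d),
      (forall Cc A (d : Ext Cc A), pb (idm Cc) d = d),
      (forall Cc A A' A'' (a : Hom A A') (a' : Hom A' A'') (d : Ext Cc A),
         pf (comp a' a) d = pf a' (pf a d)),
      (forall C'' C' Cc A (c : Hom C' Cc) (c' : Hom C'' C') (d : Ext Cc A),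
         pb (comp c c') d = pb c' (pb c d)) &
      (forall C' Cc A A' (a : Hom A A') (c : Hom C' Cc) (d : Ext Cc A),
         pf a (pb c d) = pb c (pf a d))]].

Definition is_realization_classes :=
  [/\ (forall Cc A (d : Ext Cc A), exists B (x : Hom A B) (y : Hom B Cc), realizes x y d),
      (forall Cc A B B' (d : Ext Cc A) (x : Hom A B) (y : Hom B Cc)
         (x' : Hom A B') (y' : Hom B' Cc),
         realizes x y d -> realizes x' y' d -> equiv_seq x y x' y') &
      (forall Cc A B B' (d : Ext Cc A) (x : Hom A B) (y : Hom B Cc)
         (x' : Hom A B') (y' : Hom B' Cc),
         realizes x y d -> equiv_seq x y x' y' -> realizes x' y' d)].

Definition is_realization :=
  forall A B Cc A' B' C' (x : Hom A B) (y : Hom B Cc) (d : Ext Cc A)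
    (x' : Hom A' B') (y' : Hom B' C') (d' : Ext C' A')
    (a : Hom A A') (c : Hom Cc C'),
    realizes x y d -> realizes x' y' d' -> pf a d = pb c d' ->
    exists b : Hom B B', tri_morph x y d x' y' d' a b c.

Definition is_additive_realization :=
  (forall A Cc S (i1 : Hom A S) (i2 : Hom Cc S) (p1 : Hom S A) (p2 : Hom S Cc),
     is_biprod i1 i2 p1 p2 -> realizes i1 p2 (0 : Ext Cc A)) /\
  (forall A A' B B' Cc C' SA SB SC
     (iA : Hom A SA) (iA' : Hom A' SA) (pA : Hom SA A) (pA' : Hom SA A')
     (iB : Hom B SB) (iB' : Hom B' SB) (pB : Hom SB B) (pB' : Hom SB B')
     (iC : Hom Cc SC) (iC' : Hom C' SC) (pC : Hom SC Cc) (pC' : Hom SC C')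
     (x : Hom A B) (y : Hom B Cc) (d : Ext Cc A)
     (x' : Hom A' B') (y' : Hom B' C') (d' : Ext C' A'),
     is_biprod iA iA' pA pA' -> is_biprod iB iB' pB pB' -> is_biprod iC iC' pC pC' ->
     realizes x y d -> realizes x' y' d' ->
     realizes (comp iB (comp x pA) + comp iB' (comp x' pA'))
              (comp iC (comp y pB) + comp iC' (comp y' pB'))
              (pf iA (pb pC d) + pf iA' (pb pC' d'))).

Definition ET3 :=
  forall A B Cc A' B' C' (x : Hom A B) (y : Hom B Cc) (d : Ext Cc A)
    (x' : Hom A' B') (y' : Hom B' C') (d' : Ext C' A')
    (a : Hom A A') (b : Hom B B'),
    realizes x y d -> realizes x' y' d' -> comp b x = comp x' a ->
    exists c : Hom Cc C', tri_morph x y d x' y' d' a b c.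

Definition ET3op :=
  forall A B Cc A' B' C' (x : Hom A B) (y : Hom B Cc) (d : Ext Cc A)
    (x' : Hom A' B') (y' : Hom B' C') (d' : Ext C' A')
    (b : Hom B B') (c : Hom Cc C'),
    realizes x y d -> realizes x' y' d' -> comp c y = comp y' b ->
    exists a : Hom A A', tri_morph x y d x' y' d' a b c.

Definition ET4 :=
  forall A B D Cc F (f : Hom A B) (f' : Hom B D) (d : Ext D A)
    (g : Hom B Cc) (g' : Hom Cc F) (d' : Ext F B),
    realizes f f' d -> realizes g g' d' ->
    exists E (h' : Hom Cc E) (d'' : Ext E A) (dd : Hom D E) (e : Hom E F),
      [/\ realizes (comp g f) h' d'',
          realizes dd e (pf f' d'),
          pb dd d'' = d,
          pf f d'' = pb e d' &
          [/\ comp dd f' = comp h' g & comp e h' = g']].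

Definition ET4op :=
  forall A B D Cc F (f' : Hom D B) (f : Hom B A) (d : Ext A D)
    (g' : Hom F Cc) (g : Hom Cc B) (d' : Ext B F),
    realizes f' f d -> realizes g' g d' ->
    exists E (h' : Hom E Cc) (d'' : Ext A E) (dd : Hom E D) (e : Hom F E),
      [/\ realizes h' (comp f g) d'',
          realizes e dd (pb f' d'),
          pf dd d'' = d,
          pb f d'' = pf e d' &
          [/\ comp f' dd = comp g h' & comp h' e = g']].

Definition is_extriangulated :=
  [/\ is_additive_cat, ET1, is_realization_classes, is_realization &
      [/\ is_additive_realization, ET3, ET3op, ET4 & ET4op]].

Definition MorClass := forall X Y : Ob, Hom X Y -> Prop.
Definition ExtClass := forall Cc A : Ob, Ext Cc A -> Prop.

Definition is_ideal (I : MorClass) :=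
  [/\ (forall X Y, I X Y 0),
      (forall X Y (f g : Hom X Y), I X Y f -> I X Y g -> I X Y (f + g)) &
      (forall W X Y Z (h : Hom Y Z) (f : Hom X Y) (g : Hom W X),
         I X Y f -> I W Z (comp h (comp f g)))].

Definition is_add_subfunctor (F : ExtClass) :=
  [/\ (forall Cc A, F Cc A 0),
      (forall Cc A (d d' : Ext Cc A), F Cc A d -> F Cc A d' -> F Cc A (d - d')),
      (forall Cc A A' (a : Hom A A') (d : Ext Cc A), F Cc A d -> F Cc A' (pf a d)) &
      (forall C' Cc A (c : Hom C' Cc) (d : Ext Cc A), F Cc A d -> F C' A (pb c d))].

Definition Ph (F : ExtClass) : MorClass :=
  fun X Cc (phi : Hom X Cc) => forall A (d : Ext Cc A), F X A (pb phi d).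

Definition Finj (F : ExtClass) : MorClass :=
  fun A Y (i : Hom A Y) => forall Cc (d : Ext Cc A), F Cc A d -> pf i d = 0.

Definition ObC (K : MorClass) (A : Ob) : Prop := K A A (idm A).

Definition F_injective_obj (F : ExtClass) (B : Ob) := ObC (Finj F) B.

Definition has_enough_inj (F : ExtClass) :=
  forall A : Ob, exists B Cc (e : Hom A B) (y : Hom B Cc) (d : Ext Cc A),
    [/\ realizes e y d, F Cc A d & F_injective_obj F B].

Definition has_enough_special_inj (F : ExtClass) :=
  forall A : Ob, exists B Cc (e : Hom A B) (y : Hom B Cc) (d : Ext Cc A),
    [/\ realizes e y d, F Cc A d, F_injective_obj F B &
      exists B' C' (e' : Hom A B') (y' : Hom B' C') (d' : Ext C' A)
        (b : Hom B B') (phi : Hom Cc C'),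
        [/\ realizes e' y' d', tri_morph e y d e' y' d' (idm A) b phi &
            Ph F phi]].

Definition Istar (I : MorClass) : ExtClass :=
  fun X A (eps : Ext X A) =>
    exists Cc (i : Hom X Cc) (d : Ext Cc A), I X Cc i /\ eps = pb i d.

Definition Iperp (I : MorClass) : MorClass :=
  fun A Y (g : Hom A Y) =>
    forall X Cc (m : Hom X Cc), I X Cc m -> forall d : Ext Cc A, pb m (pf g d) = 0.

Definition gen_obj (S : Ob -> Prop) : MorClass :=
  fun X Y f => forall J : MorClass, is_ideal J ->
    (forall A, S A -> J A A (idm A)) -> J X Y f.

Definition is_object_ideal (K : MorClass) :=
  forall X Y (f : Hom X Y), K X Y f <-> gen_obj (ObC K) f.

Definition special_precover (I : MorClass) (Cc : Ob) :=
  exists X (i : Hom X Cc), I X Cc i /\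
    exists A B (x : Hom A B) (y : Hom B Cc) (d : Ext Cc A)
      A' (x' : Hom A' X) (d' : Ext Cc A') (j : Hom A A') (b : Hom B X),
      [/\ realizes x y d, realizes x' i d',
          tri_morph x y d x' i d' j b (idm Cc) & Iperp I j].

Definition object_special_precover (I : MorClass) (Cc : Ob) :=
  exists X (i : Hom X Cc) A (x : Hom A X) (d : Ext Cc A),
    [/\ I X Cc i, realizes x i d & ObC (Iperp I) A].

Definition special_precovering (I : MorClass) := forall Cc, special_precover I Cc.
Definition object_special_precovering (I : MorClass) :=
  forall Cc, object_special_precover I Cc.

Definition enough_projective_morphisms :=
  forall Cc : Ob, exists K P (x : Hom K P) (p : Hom P Cc) (gam : Ext Cc K),
    realizes x p gam /\ forall A (d : Ext Cc A), pb p d = 0.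

Definition enough_injective_objects :=
  forall A : Ob, exists E Cc (x : Hom A E) (y : Hom E Cc) (d : Ext Cc A),
    realizes x y d /\ forall X (eps : Ext X E), eps = 0.

Definition same_class (I J : MorClass) := forall X Y (f : Hom X Y), I X Y f <-> J X Y f.

Definition cond_a (I : MorClass) :=
  exists F : ExtClass, [/\ is_add_subfunctor F, has_enough_inj F & same_class I (Ph F)].
Definition cond_a' (I : MorClass) :=
  exists F : ExtClass,
    [/\ is_add_subfunctor F, has_enough_special_inj F & same_class I (Ph F)].
Definition cond_b (I : MorClass) := object_special_precovering I.
Definition cond_c (I : MorClass) :=
  has_enough_special_inj (Istar I) /\ same_class I (Ph (Istar I)).
Definition cond_d (I : MorClass) :=
  special_precovering I /\ is_object_ideal (Iperp I).

End Extri.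

(* Main.v *)
Require Import Defs.
From mathcomp Require Import all_boot all_algebra.
Set Implicit Arguments. Unset Strict Implicit. Unset Printing Implicit Defensive.
Import GRing.Theory.
Local Open Scope ring_scope.

Notation HOM := Defs.Hom.
Notation EXT := Defs.Ext.
Notation cmp := Defs.comp.

Lemma addf0 (U V : zmodType) (f : U -> V) :
  (forall a b, f (a + b) = f a + f b) -> f 0 = 0.
Proof.
move=> H; have := H 0 0; rewrite addr0 => /(congr1 (fun t => t - f 0)).
by rewrite subrr addrK.
Qed.

Lemma addfN (U V : zmodType) (f : U -> V) :
  (forall a b, f (a + b) = f a + f b) -> forall a, f (- a) = - f a.
Proof.
move=> H a; apply/eqP; rewrite -addr_eq0 -H addNr; exact/eqP/addf0.
Qed.

Lemma addfB (U V : zmodType) (f : U -> V) :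
  (forall a b, f (a + b) = f a + f b) -> forall a b, f (a - b) = f a - f b.
Proof. by move=> H a b; rewrite H (addfN H). Qed.


Lemma cmpA (C : PreExtri) (HC : is_extriangulated C) (A B Cc D : Obj C)
  (h : HOM Cc D) (g : HOM B Cc) (f : HOM A B) : cmp h (cmp g f) = cmp (cmp h g) f.
Proof. by case: HC => [[H _ _ _ _] _ _ _ _]; apply: H. Qed.
Lemma cmp1l (C : PreExtri) (HC : is_extriangulated C) (A B : Obj C) (f : HOM A B) :
  cmp (idm B) f = f.
Proof. by case: HC => [[_ H _ _ _] _ _ _ _]; apply: H. Qed.
Lemma cmp1r (C : PreExtri) (HC : is_extriangulated C) (A B : Obj C) (f : HOM A B) :
  cmp f (idm A) = f.
Proof. by case: HC => [[_ _ H _ _] _ _ _ _]; apply: H. Qed.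
Lemma cmpDl (C : PreExtri) (HC : is_extriangulated C) (A B Cc : Obj C)
  (g g' : HOM B Cc) (f : HOM A B) : cmp (g + g') f = cmp g f + cmp g' f.
Proof. by case: HC => [[_ _ _ H _] _ _ _ _]; apply: H. Qed.
Lemma cmpDr (C : PreExtri) (HC : is_extriangulated C) (A B Cc : Obj C)
  (g : HOM B Cc) (f f' : HOM A B) : cmp g (f + f') = cmp g f + cmp g f'.
Proof. by case: HC => [[_ _ _ _ [H _ _]] _ _ _ _]; apply: H. Qed.
Lemma zero_obj (C : PreExtri) (HC : is_extriangulated C) : exists Z : Obj C, idm Z = 0.
Proof. by case: HC => [[_ _ _ _ [_ H _]] _ _ _ _]. Qed.
Lemma biprod_ex (C : PreExtri) (HC : is_extriangulated C) (A1 A2 : Obj C) :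
  exists S (i1 : HOM A1 S) (i2 : HOM A2 S) (p1 : HOM S A1) (p2 : HOM S A2),
    is_biprod i1 i2 p1 p2.
Proof. by case: HC => [[_ _ _ _ [_ _ H]] _ _ _ _]. Qed.

Lemma cmp0l (C : PreExtri) (HC : is_extriangulated C) (A B Cc : Obj C) (f : HOM A B) :
  cmp (0 : HOM B Cc) f = 0.
Proof. exact: (addf0 (f := fun g : HOM B Cc => cmp g f) (fun a b => cmpDl HC a b f)). Qed.
Lemma cmp0r (C : PreExtri) (HC : is_extriangulated C) (A B Cc : Obj C) (g : HOM B Cc) :
  cmp g (0 : HOM A B) = 0.
Proof. exact: (addf0 (f := fun f : HOM A B => cmp g f) (fun a b => cmpDr HC g a b)). Qed.
Lemma cmpNl (C : PreExtri) (HC : is_extriangulated C) (A B Cc : Obj C) (g : HOM B Cc) (f : HOM A B) :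
  cmp (- g) f = - cmp g f.
Proof. exact: (addfN (f := fun g : HOM B Cc => cmp g f) (fun a b => cmpDl HC a b f)). Qed.
Lemma cmpNr (C : PreExtri) (HC : is_extriangulated C) (A B Cc : Obj C) (g : HOM B Cc) (f : HOM A B) :
  cmp g (- f) = - cmp g f.
Proof. exact: (addfN (f := fun f : HOM A B => cmp g f) (fun a b => cmpDr HC g a b)). Qed.

Lemma pfDa (C : PreExtri) (HC : is_extriangulated C) (Cc A A' : Obj C) (a a' : HOM A A') (d : EXT Cc A) :
  pf (a + a') d = pf a d + pf a' d.
Proof. by case: HC => [_ [H _ _ _ _] _ _ _]; apply: H. Qed.
Lemma pfDd (C : PreExtri) (HC : is_extriangulated C) (Cc A A' : Obj C) (a : HOM A A') (d d' : EXT Cc A) :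
  pf a (d + d') = pf a d + pf a d'.
Proof. by case: HC => [_ [_ H _ _ _] _ _ _]; apply: H. Qed.
Lemma pbDc (C : PreExtri) (HC : is_extriangulated C) (C' Cc A : Obj C) (c c' : HOM C' Cc) (d : EXT Cc A) :
  pb (c + c') d = pb c d + pb c' d.
Proof. by case: HC => [_ [_ _ H _ _] _ _ _]; apply: H. Qed.
Lemma pbDd (C : PreExtri) (HC : is_extriangulated C) (C' Cc A : Obj C) (c : HOM C' Cc) (d d' : EXT Cc A) :
  pb c (d + d') = pb c d + pb c d'.
Proof. by case: HC => [_ [_ _ _ H _] _ _ _]; apply: H. Qed.
Lemma pf1 (C : PreExtri) (HC : is_extriangulated C) (Cc A : Obj C) (d : EXT Cc A) : pf (idm A) d = d.
Proof. by case: HC => [_ [_ _ _ _ [H _ _ _ _]] _ _ _]; apply: H. Qed.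
Lemma pb1 (C : PreExtri) (HC : is_extriangulated C) (Cc A : Obj C) (d : EXT Cc A) : pb (idm Cc) d = d.
Proof. by case: HC => [_ [_ _ _ _ [_ H _ _ _]] _ _ _]; apply: H. Qed.
Lemma pf_cmp (C : PreExtri) (HC : is_extriangulated C) (Cc A A' A'' : Obj C) (a : HOM A A') (a' : HOM A' A'') (d : EXT Cc A) :
  pf (cmp a' a) d = pf a' (pf a d).
Proof. by case: HC => [_ [_ _ _ _ [_ _ H _ _]] _ _ _]; apply: H. Qed.
Lemma pb_cmp (C : PreExtri) (HC : is_extriangulated C) (C'' C' Cc A : Obj C) (c : HOM C' Cc) (c' : HOM C'' C') (d : EXT Cc A) :
  pb (cmp c c') d = pb c' (pb c d).
Proof. by case: HC => [_ [_ _ _ _ [_ _ _ H _]] _ _ _]; apply: H. Qed.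
Lemma pfpb (C : PreExtri) (HC : is_extriangulated C) (C' Cc A A' : Obj C) (a : HOM A A') (c : HOM C' Cc) (d : EXT Cc A) :
  pf a (pb c d) = pb c (pf a d).
Proof. by case: HC => [_ [_ _ _ _ [_ _ _ _ H]] _ _ _]; apply: H. Qed.

Lemma pf0a (C : PreExtri) (HC : is_extriangulated C) (Cc A A' : Obj C) (d : EXT Cc A) :
  pf (0 : HOM A A') d = 0.
Proof. exact: (addf0 (f := fun a : HOM A A' => pf a d) (fun a b => pfDa HC a b d)). Qed.
Lemma pfd0 (C : PreExtri) (HC : is_extriangulated C) (Cc A A' : Obj C) (a : HOM A A') :
  pf a (0 : EXT Cc A) = 0.
Proof. exact: (addf0 (pfDd HC a)). Qed.
Lemma pb0c (C : PreExtri) (HC : is_extriangulated C) (C' Cc A : Obj C) (d : EXT Cc A) :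
  pb (0 : HOM C' Cc) d = 0.
Proof. exact: (addf0 (f := fun c : HOM C' Cc => pb c d) (fun a b => pbDc HC a b d)). Qed.
Lemma pbd0 (C : PreExtri) (HC : is_extriangulated C) (C' Cc A : Obj C) (c : HOM C' Cc) :
  pb c (0 : EXT Cc A) = 0.
Proof. exact: (addf0 (pbDd HC c)). Qed.
Lemma pfN (C : PreExtri) (HC : is_extriangulated C) (Cc A A' : Obj C) (a : HOM A A') (d : EXT Cc A) :
  pf a (- d) = - pf a d.
Proof. exact: (addfN (pfDd HC a)). Qed.
Lemma pbN (C : PreExtri) (HC : is_extriangulated C) (C' Cc A : Obj C) (c : HOM C' Cc) (d : EXT Cc A) :
  pb c (- d) = - pb c d.
Proof. exact: (addfN (pbDd HC c)). Qed.
Lemma pfB (C : PreExtri) (HC : is_extriangulated C) (Cc A A' : Obj C) (a : HOM A A') (d d' : EXT Cc A) :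
  pf a (d - d') = pf a d - pf a d'.
Proof. exact: (addfB (pfDd HC a)). Qed.
Lemma pbB (C : PreExtri) (HC : is_extriangulated C) (C' Cc A : Obj C) (c : HOM C' Cc) (d d' : EXT Cc A) :
  pb c (d - d') = pb c d - pb c d'.
Proof. exact: (addfB (pbDd HC c)). Qed.
Lemma realize_ex (C : PreExtri) (HC : is_extriangulated C) (Cc A : Obj C) (d : EXT Cc A) :
  exists B (x : HOM A B) (y : HOM B Cc), realizes x y d.
Proof. by case: HC => [_ _ [H _ _] _ _]; apply: H. Qed.

Lemma split_l (C : PreExtri) (HC : is_extriangulated C) (W : Obj C) :
  exists Z : Obj C, realizes (0 : HOM Z W) (idm W) (0 : EXT W Z).
Proof.
have [Z HZ] := zero_obj HC; exists Z.
have := HC; case => [HA HE Hrc Hr [[Hs _] H3 H3op H4 H4op]].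
apply: (Hs _ _ _ _ _ (0 : HOM W Z)).
split; rewrite ?(cmp0l HC) ?(cmp0r HC) ?(cmp1l HC) ?add0r //.
Qed.

Lemma split_r (C : PreExtri) (HC : is_extriangulated C) (Y : Obj C) :
  exists Z : Obj C, realizes (idm Y) (0 : HOM Y Z) (0 : EXT Z Y).
Proof.
have [Z HZ] := zero_obj HC; exists Z.
have := HC; case => [HA HE Hrc Hr [[Hs _] H3 H3op H4 H4op]].
apply: (Hs _ _ _ _ (0 : HOM Z Y) (idm Y)).
split; rewrite ?(cmp0l HC) ?(cmp0r HC) ?(cmp1l HC) ?addr0 //.
Qed.

Lemma LL (C : PreExtri) (HC : is_extriangulated C) (A' B' Cc W : Obj C)
  (x' : HOM A' B') (y' : HOM B' Cc) (eps : EXT Cc A') (c : HOM W Cc) :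
  realizes x' y' eps -> pb c eps = 0 -> exists b, c = cmp y' b.
Proof.
move=> Hx Hc; have [Z HZ] := split_l HC W.
have := HC; case => [HA HE Hrc Hr _].
have [|b [_ Hb _]] := Hr _ _ _ _ _ _ _ _ _ _ _ _ (0 : HOM Z A') c HZ Hx.
  by rewrite Hc (pf0a HC).
by exists b; rewrite -Hb (cmp1r HC).
Qed.

Lemma DLL (C : PreExtri) (HC : is_extriangulated C) (A B Cc Y : Obj C)
  (x : HOM A B) (y : HOM B Cc) (d : EXT Cc A) (a : HOM A Y) :
  realizes x y d -> pf a d = 0 -> exists b, cmp b x = a.
Proof.
move=> Hx Ha; have [Z HZ] := split_r HC Y.
have := HC; case => [HA HE Hrc Hr _].
have [|b [Hb _ _]] := Hr _ _ _ _ _ _ _ _ _ _ _ _ a (0 : HOM Cc Z) Hx HZ.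
  by rewrite Ha (pb0c HC).
by exists b; rewrite Hb (cmp1l HC).
Qed.

Lemma DK (C : PreExtri) (HC : is_extriangulated C) (A B Cc : Obj C)
  (x : HOM A B) (y : HOM B Cc) (d : EXT Cc A) : realizes x y d -> pb y d = 0.
Proof.
move=> Hx; have [Z HZ] := split_l HC B.
have := HC; case => [HA HE Hrc Hr [_ H3 H3op _ _]].
have [|a [_ _ Ha]] := H3op _ _ _ _ _ _ _ _ _ _ _ _ (idm B) y HZ Hx.
  by [].
by rewrite -Ha (pfd0 HC).
Qed.

Lemma IK (C : PreExtri) (HC : is_extriangulated C) (A B Cc : Obj C)
  (x : HOM A B) (y : HOM B Cc) (d : EXT Cc A) : realizes x y d -> pf x d = 0.
Proof.
move=> Hx; have [Z HZ] := split_r HC B.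
have := HC; case => [HA HE Hrc Hr [_ H3 H3op _ _]].
have [|c [_ _ Hc]] := H3 _ _ _ _ _ _ _ _ _ _ _ _ x (idm B) Hx HZ.
  by [].
by rewrite Hc (pbd0 HC).
Qed.

Lemma CZ (C : PreExtri) (HC : is_extriangulated C) (A B Cc : Obj C)
  (x : HOM A B) (y : HOM B Cc) (d : EXT Cc A) : realizes x y d -> cmp y x = 0.
Proof.
move=> Hx; have [Z HZ] := split_r HC A.
have := HC; case => [HA HE Hrc Hr _].
have [|b [Hb1 Hb2 _]] := Hr _ _ _ _ _ _ _ _ _ _ _ _ (idm A) (0 : HOM Z Cc) HZ Hx.
  by rewrite (pfd0 HC) (pb0c HC).
move: Hb1 Hb2; rewrite !(cmp1r HC) (cmp0l HC) => ->.
by move=> ->.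
Qed.

Lemma E1 (C : PreExtri) (HC : is_extriangulated C) (A B Cc A' : Obj C)
  (x : HOM A B) (y : HOM B Cc) (d : EXT Cc A) (eps : EXT Cc A') :
  realizes x y d -> pb y eps = 0 -> exists f : HOM A A', eps = pf f d.
Proof.
move=> Hx He; have [B' [x' [y' Hx']]] := realize_ex HC eps.
have [b Hb] := LL HC Hx' He.
have := HC; case => [HA HE Hrc Hr [_ H3 H3op _ _]].
have [|a [_ _ Ha]] := H3op _ _ _ _ _ _ _ _ _ _ _ _ b (idm Cc) Hx Hx'.
  by rewrite (cmp1l HC).
by exists a; rewrite Ha (pb1 HC).
Qed.

Lemma E2 (C : PreExtri) (HC : is_extriangulated C) (K B D X : Obj C)
  (e : HOM K B) (y : HOM B D) (d : EXT D K) (th : EXT X K) :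
  realizes e y d -> pf e th = 0 -> exists h : HOM X D, th = pb h d.
Proof.
move=> He Ht; have [B'' [x'' [y'' Hx'']]] := realize_ex HC th.
have [b Hb] := DLL HC Hx'' Ht.
have := HC; case => [HA HE Hrc Hr [_ H3 H3op _ _]].
have [|c [_ _ Hc]] := H3 _ _ _ _ _ _ _ _ _ _ _ _ (idm K) b Hx'' He.
  by rewrite (cmp1r HC).
by exists c; rewrite -Hc (pf1 HC).
Qed.

Lemma ME (C : PreExtri) (HC : is_extriangulated C) (A0 B0 E0 W : Obj C)
  (u : HOM A0 B0) (v : HOM B0 E0) (k : EXT E0 A0) (th : EXT W B0) :
  realizes u v k -> pf v th = 0 -> exists th' : EXT W A0, th = pf u th'.
Proof.
move=> Hu Hv; have [M [s [t Hs]]] := realize_ex HC th.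
have := HC; case => [HA HE Hrc Hr [_ H3 H3op H4 _]].
have [E [h' [d'' [dd [e [_ Hdd _ Hd _]]]]]] := H4 _ _ _ _ _ _ _ _ _ _ _ Hu Hs.
rewrite Hv in Hdd.
have [sg Hsg] := LL HC Hdd (pbd0 HC E0 (idm W)).
exists (pb sg d''); rewrite (pfpb HC) Hd -(pb_cmp HC) -Hsg (pb1 HC) //.
Qed.

Lemma ideal_cmp (C : PreExtri) (HC : is_extriangulated C) (I : MorClass C) (HI : is_ideal I)
  (W X Y Z : Obj C) (h : HOM Y Z) (f : HOM X Y) (g : HOM W X) :
  I X Y f -> I W Z (cmp h (cmp f g)).
Proof. by case: HI => _ _ H; apply: H. Qed.

Lemma ideal_cmpr (C : PreExtri) (HC : is_extriangulated C) (I : MorClass C) (HI : is_ideal I)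
  (W X Y : Obj C) (f : HOM X Y) (g : HOM W X) : I X Y f -> I W Y (cmp f g).
Proof. by move=> H; rewrite -(cmp1l HC (cmp f g)); apply: ideal_cmp. Qed.

Lemma ideal_cmpl (C : PreExtri) (HC : is_extriangulated C) (I : MorClass C) (HI : is_ideal I)
  (X Y Z : Obj C) (h : HOM Y Z) (f : HOM X Y) : I X Y f -> I X Z (cmp h f).
Proof. by move=> H; rewrite -(cmp1r HC f); apply: ideal_cmp. Qed.

Lemma Istar_pb (C : PreExtri) (HC : is_extriangulated C) (I : MorClass C) (HI : is_ideal I)
  (C' Cc A : Obj C) (c : HOM C' Cc) (d : EXT Cc A) : Istar I d -> Istar I (pb c d).
Proof.
case=> [C1 [i [d1 [Hi ->]]]]; exists C1, (cmp i c), d1; split.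
  exact: ideal_cmpr.
by rewrite (pb_cmp HC).
Qed.

Lemma Istar_pf (C : PreExtri) (HC : is_extriangulated C) (I : MorClass C)
  (Cc A A' : Obj C) (a : HOM A A') (d : EXT Cc A) : Istar I d -> Istar I (pf a d).
Proof.
case=> [C1 [i [d1 [Hi ->]]]]; exists C1, i, (pf a d1); split => //.
by rewrite (pfpb HC).
Qed.

Lemma Istar_sub (C : PreExtri) (HC : is_extriangulated C) (I : MorClass C) (HI : is_ideal I) :
  is_add_subfunctor (Istar I).
Proof.
split.
- move=> Cc A; exists Cc, 0, 0; split; first by case: HI.
  by rewrite (pbd0 HC).
- move=> Cc A d d' [C1 [i [d1 [Hi ->]]]] [C2 [i' [d2 [Hi' ->]]]].
  have [S [j1 [j2 [p1 [p2 [H11 H22 H12 H21 Hs]]]]]] := biprod_ex HC C1 C2.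
  exists S, (cmp j1 i + cmp j2 i'), (pb p1 d1 - pb p2 d2); split.
    by have [_ Hadd _] := HI; apply: Hadd; apply: (ideal_cmpl HC HI).
  rewrite (pbDc HC) !(pb_cmp HC) !(pbB HC).
  rewrite -(pb_cmp HC p1 j1) -(pb_cmp HC p2 j1) -(pb_cmp HC p1 j2) -(pb_cmp HC p2 j2) H11 H22 H12 H21.
  rewrite !(pb0c HC) !(pb1 HC) !(pbd0 HC).
  by rewrite subr0 add0r.
- by move=> *; apply: Istar_pf.
- by move=> *; apply: Istar_pb.
Qed.

Lemma Iperp_ideal (C : PreExtri) (HC : is_extriangulated C) (I : MorClass C) :
  is_ideal (Iperp I).
Proof.
split.
- by move=> X Y X1 C1 m Hm d; rewrite (pf0a HC) (pbd0 HC).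
- move=> X Y f g Hf Hg X1 C1 m Hm d.
  by rewrite (pfDa HC) (pbDd HC) (Hf _ _ _ Hm) (Hg _ _ _ Hm) addr0.
- move=> W X Y Z h f g Hf X1 C1 m Hm d.
  by rewrite !(pf_cmp HC) -(pfpb HC) (Hf _ _ _ Hm) (pfd0 HC).
Qed.

Lemma partV (C : PreExtri) (HC : is_extriangulated C) (I : MorClass C) (HI : is_ideal I) :
  cond_c I -> cond_a' I.
Proof. by case=> H1 H2; exists (Istar I); split => //; apply: Istar_sub. Qed.

Lemma partI' (C : PreExtri) (I : MorClass C) : cond_a' I -> cond_a I.
Proof.
case=> F [HF Hs Hsame]; exists F; split => // A.
have [B [Cc [e [y [d [H1 H2 H3 _]]]]]] := Hs A.
by exists B, Cc, e, y, d.
Qed.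

Lemma partI (C : PreExtri) (HC : is_extriangulated C) (I : MorClass C) (HI : is_ideal I) :
  enough_projective_morphisms C -> cond_a I -> cond_b I.
Proof.
move=> Hproj [F [HF Hinj Hsame]] Cc.
have [K [P [x [p [gam [Hx Hp]]]]]] := Hproj Cc.
have [B [Dd [e [y [del [He Hdel HBinj]]]]]] := Hinj K.
have [X [x' [i Hx']]] := realize_ex HC (pf e gam).
have [HF0 HFB HFpf HFpb] := HF.
exists X, i, B, x', (pf e gam); split => //.
- apply/Hsame => A d.
  have [f ->] := E1 HC Hx (Hp A d).
  rewrite -(pfpb HC); apply: HFpf.
  have [|h ->] := E2 HC He (d := del) (th := pb i gam).
    by rewrite (pfpb HC); apply: (DK HC Hx').
  exact: HFpb.
- move=> X1 C1 m Hm d; rewrite (pf1 HC).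
  have /Hsame Hm' := Hm.
  by rewrite -(HBinj _ _ (Hm' _ d)) (pf1 HC).
Qed.

Lemma partIV (C : PreExtri) (HC : is_extriangulated C) (I : MorClass C) (HI : is_ideal I) :
  cond_d I -> cond_b I.
Proof.
move=> [Hsp Hobj] Cc.
have [X [i [Hi [A [B [x [y [d [A' [x' [d' [j [b [Hx Hx' [Hm1 Hm2 Hm3] Hj]]]]]]]]]]]]]] := Hsp Cc.
pose J : MorClass C := fun X Y f => exists N (k : HOM X N) (h : HOM N Y),
  ObC (Iperp I) N /\ f = cmp h k.
have HJ : is_ideal J.
  have [Hp0 HpD HpC] := Iperp_ideal HC I.
  split.
  - move=> X1 Y1; have [Z HZ] := zero_obj HC.
    exists Z, 0, 0; split; last by rewrite (cmp0l HC).
    by rewrite /ObC HZ.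
  - move=> X1 Y1 f g [N1 [k1 [h1 [HN1 ->]]]] [N2 [k2 [h2 [HN2 ->]]]].
    have [S [j1 [j2 [p1 [p2 [H11 H22 H12 H21 Hs]]]]]] := biprod_ex HC N1 N2.
    exists S, (cmp j1 k1 + cmp j2 k2), (cmp h1 p1 + cmp h2 p2); split.
      rewrite /ObC -Hs; apply: HpD.
        by rewrite -(cmp1l HC p1) -(cmp1r HC j1) -(cmpA HC); apply: HpC.
      by rewrite -(cmp1l HC p2) -(cmp1r HC j2) -(cmpA HC); apply: HpC.
    rewrite (cmpDr HC) !(cmpDl HC) !(cmpA HC) -!(cmpA HC h1) -!(cmpA HC h2).
    rewrite H11 H22 H12 H21.
    by rewrite !(cmp0l HC) !(cmp0r HC) !(cmp1l HC) addr0 add0r.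
  - move=> W X1 Y1 Z1 h f g [N [k [h0 [HN ->]]]].
    exists N, (cmp k g), (cmp h h0); split => //.
    by rewrite !(cmpA HC).
have [N [k [h [HN Hjk]]]] : J _ _ j.
  apply: (proj1 (Hobj _ _ j) Hj J HJ) => N HN.
  by exists N, (idm N), (idm N); split => //; rewrite (cmp1l HC).
have [X2 [x2 [i2 Hx2]]] := realize_ex HC (pf k d).
have := HC; case => [HA HE Hrc Hr _].
have [|b2 [_ Hb2 _]] := Hr _ _ _ _ _ _ _ _ _ _ _ _ h (idm Cc) Hx2 Hx'.
  by rewrite -(pf_cmp HC) -Hjk Hm3.
exists X2, i2, N, x2, (pf k d); split => //.
rewrite -(cmp1l HC i2) Hb2; exact: (ideal_cmpr HC HI).
Qed.

Lemma partIII (C : PreExtri) (HC : is_extriangulated C) (I : MorClass C) (HI : is_ideal I) :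
  enough_projective_morphisms C -> cond_c I -> cond_d I.
Proof.
move=> Hproj [Hsi Hsame]; split.
- move=> Cc.
  have [K [P [x [p [gam [Hx Hp]]]]]] := Hproj Cc.
  have [B [Dd [e [y [del [He Hdel HBinj _]]]]]] := Hsi K.
  have [X [x' [i Hx']]] := realize_ex HC (pf e gam).
  have := HC; case => [HA HE Hrc Hr _].
  have [|b Hb] := Hr _ _ _ _ _ _ _ _ _ _ _ _ e (idm Cc) Hx Hx'.
    by rewrite (pb1 HC).
  exists X, i; split.
    apply/Hsame => A d.
    have [f ->] := E1 HC Hx (Hp A d).
    rewrite -(pfpb HC); apply: Istar_pf => //.
    have [|h ->] := E2 HC He (d := del) (th := pb i gam).
      by rewrite (pfpb HC); apply: (DK HC Hx').
    exact: Istar_pb.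
  exists K, P, x, p, gam, B, x', (pf e gam), e, b; split => //.
  move=> X1 C1 m Hm d.
  rewrite -(HBinj _ (pb m (pf e d))) ?(pf1 HC) //.
  by exists C1, m, (pf e d).
- move=> X Y g; split.
  + move=> Hg.
    have [B [Dd [e [y [del [He Hdel HBinj _]]]]]] := Hsi X.
    have [|b Hb] := DLL HC He (a := g).
      case: Hdel => [C1 [m [d0 [Hm ->]]]].
      by rewrite (pfpb HC) (Hg _ _ _ Hm).
    move=> J HJ Hid; rewrite -Hb -(cmp1l HC e).
    have [_ _ HJc] := HJ; apply: HJc; apply: Hid.
    move=> X1 C1 m Hm d; rewrite (pf1 HC).
    rewrite -(HBinj _ (pb m d)) ?(pf1 HC) //.
    by exists C1, m, d.
  + move=> H; apply: H; first exact: Iperp_ideal.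
    by move=> A HA.
Qed.

Lemma partII (C : PreExtri) (HC : is_extriangulated C) (I : MorClass C) (HI : is_ideal I) :
  enough_injective_objects C -> cond_b I -> cond_c I.
Proof.
move=> Hinj Hb.
have Hsame : same_class I (Ph (Istar I)).
  move=> X Cc phi; split.
    by move=> Hphi A d; exists Cc, phi, d.
  move=> Hphi.
  have [X0 [i [A [x [del [Hi Hx HA]]]]]] := Hb Cc.
  have [C1 [j [d1 [Hj Hd]]]] := Hphi A del.
  have [|b ->] := LL HC Hx (c := phi).
    by rewrite Hd -(HA _ _ _ Hj d1) (pf1 HC).
  exact: (ideal_cmpr HC HI).
split => // A.
have [E [D [x [y [eta [Hx HE]]]]]] := Hinj A.
have [X [i [A' [x' [th [Hi Hx' HA']]]]]] := Hb D.
have [B [e [w He]]] := realize_ex HC (pb i eta).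
have := HC; case => [HA HE1 Hrc Hr _].
have [|b [Hb1 Hb2 Hb3]] := Hr _ _ _ _ _ _ _ _ _ _ _ _ (idm A) i He Hx.
  by rewrite (pf1 HC).
exists B, X, e, w, (pb i eta); split => //.
- by exists D, i, eta.
- move=> C3 d [C4 [j [eps [Hj ->]]]]; rewrite (pf1 HC).
  have [eps' Heps'] : exists eps', pf w eps = pf x' eps'.
    apply: (ME HC Hx').
    by rewrite -(pf_cmp HC) Hb2 (pf_cmp HC) (HE _ (pf b eps)) (pfd0 HC).
  have [|f' Hf'] := LL HC He (c := x') (eps := pb i eta) (W := A').
    by rewrite -(pb_cmp HC) (CZ HC Hx') (pb0c HC).
  have [eps2 Heps2] : exists eps2, eps - pf f' eps' = pf e eps2.
    apply: (ME HC He).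
    by rewrite (pfB HC) -(pf_cmp HC) -Hf' Heps' subrr.
  have -> : eps = pf f' eps' + pf e eps2 by rewrite -Heps2 addrC subrK.
  rewrite (pbDd HC) -!(pfpb HC).
  have -> : pb j eps' = 0 by rewrite -(HA' _ _ _ Hj eps') (pf1 HC).
  rewrite (pfd0 HC) add0r.
  have [h ->] := E2 HC Hx (HE _ (pf x eps2)).
  rewrite -(pb_cmp HC) (pfpb HC).
  have [f Hf] : exists f : HOM A' B, pf e eta = pf f th.
    by apply: (E1 HC Hx'); rewrite -(pfpb HC) (IK HC He).
  rewrite Hf -(pfpb HC).
  have Hhj : I _ _ (cmp h j) by apply: (ideal_cmpl HC HI).
  by move: (HA' _ _ _ Hhj th); rewrite (pf1 HC) => ->; rewrite (pfd0 HC).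
- exists E, D, x, y, eta, b, i; split => //.
  by apply/Hsame.
Qed.

Theorem theorem5p5 (C : PreExtri) (HC : is_extriangulated C)
  (I : MorClass C) (HI : is_ideal I) :
  [/\ (enough_projective_morphisms C -> cond_a I -> cond_b I) /\
      (enough_projective_morphisms C -> cond_a' I -> cond_b I),
      enough_injective_objects C -> cond_b I -> cond_c I,
      enough_projective_morphisms C -> cond_c I -> cond_d I,
      cond_d I -> cond_b I &
      cond_c I -> cond_a' I].
Proof.
split.
- split; first exact: partI.
  by move=> Hp Ha; apply: (partI HC HI Hp); apply: partI'.
- exact: partII.
- exact: partIII.
- exact: partIV.
- exact: partV.
Qed.
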